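(* Consider $N$ agents with $$\dot x_i=\sum_{j=1}^N\alpha_{ij}(y_j-y_i),\qquad y_i=\mathrm{sat}_i(x_i),\qquad i\in\mathcal V=\{1,\dots,N\},$$ where the constant weights $\alpha_{ij}=\alpha_{ji}\ge0$ define an undirected, connected graph, and the saturation levels $s_i>0$ may be equal (homogeneous) or different (heterogeneous). Assume the initial state $x(t_0)$ is not a consensus state, i.e. not all $x_i(t_0)$ are equal. Then the agents achieve consensus if and only if $$\frac1N\Big|\sum_{i=1}^N x_i(t_0)\Big|\le\min_{i\in\mathcal V}s_i .$$
   Context: $\mathrm{sat}_i(x)=\mathrm{sign}(x)\min\{|x|,s_i\}$. The graph is connected if for any two nodes there is a path of edges $\{i,j\}$ with $\alpha_{ij}>0$ joining them. Consensus is achieved if there exists $C\in\mathbb R$ with $\lim_{t\to\infty}x_i(t)=C$ for all $i\in\mathcal V$. *)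

(* Defs.v *)
From Stdlib Require Import Reals Lra Relations.
Open Scope R_scope.

Fixpoint sumN (n : nat) (f : nat -> R) : R :=
  match n with
  | O => 0
  | S k => sumN k f + f k
  end.

(* min_{i=0}^{n-1} f i  (value for n = 0 is irrelevant) *)
Fixpoint minN (n : nat) (f : nat -> R) : R :=
  match n with
  | O => 0
  | S O => f O
  | S k => Rmin (minN k f) (f k)
  end.

Definition sign (x : R) : R :=
  if Rlt_dec 0 x then 1 else if Rlt_dec x 0 then -1 else 0.

Definition sat (s x : R) : R := sign x * Rmin (Rabs x) s.

Definition edge (N : nat) (alpha : nat -> nat -> R) (i j : nat) : Prop :=
  (i < N)%nat /\ (j < N)%nat /\ alpha i j > 0.

Definition connected (N : nat) (alpha : nat -> nat -> R) : Prop :=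
  forall i j, (i < N)%nat -> (j < N)%nat -> clos_refl_trans nat (edge N alpha) i j.

Definition is_solution (N : nat) (alpha : nat -> nat -> R) (s : nat -> R)
    (t0 : R) (x : R -> nat -> R) : Prop :=
  (forall i, (i < N)%nat -> forall t, t0 < t ->
     derivable_pt_lim (fun tau => x tau i) t
       (sumN N (fun j => alpha i j * (sat (s j) (x t j) - sat (s i) (x t i))))) /\
  (forall i, (i < N)%nat -> forall eps, eps > 0 -> exists delta, delta > 0 /\
     forall t, t0 <= t < t0 + delta -> Rabs (x t i - x t0 i) < eps).

Definition consensus (N : nat) (x : R -> nat -> R) : Prop :=
  exists C : R, forall i, (i < N)%nat ->
    forall eps, eps > 0 -> exists T, forall t, t >= T -> Rabs (x t i - C) < eps.

(* Main.v *)
Require Import Defs.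
From Stdlib Require Import Reals Lra Relations Lia Classical.
Open Scope R_scope.

Lemma sumN_ext n f g : (forall i, (i < n)%nat -> f i = g i) -> sumN n f = sumN n g.
Proof. induction n; simpl; intros H; auto. rewrite IHn by (intros; apply H; lia). rewrite H by lia. auto. Qed.

Lemma sumN_le n f g : (forall i, (i < n)%nat -> f i <= g i) -> sumN n f <= sumN n g.
Proof. induction n; simpl; intros H. lra. assert (f n <= g n) by (apply H; lia).
  assert (sumN n f <= sumN n g) by (apply IHn; intros; apply H; lia). lra. Qed.

Lemma sumN_lt n f g : (0 < n)%nat -> (forall i, (i < n)%nat -> f i < g i) -> sumN n f < sumN n g.
Proof. intros Hn H. destruct n. lia. simpl.
  assert (f n < g n) by (apply H; lia).
  assert (sumN n f <= sumN n g) by (apply sumN_le; intros; left; apply H; lia). lra. Qed.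

Lemma sumN_plus n f g : sumN n (fun i => f i + g i) = sumN n f + sumN n g.
Proof. induction n; simpl; lra. Qed.

Lemma sumN_opp n f : sumN n (fun i => - f i) = - sumN n f.
Proof. induction n; simpl; lra. Qed.

Lemma sumN_scal n c f : sumN n (fun i => c * f i) = c * sumN n f.
Proof. induction n; simpl; lra. Qed.

Lemma sumN_const n c : sumN n (fun _ => c) = INR n * c.
Proof. induction n; simpl sumN. simpl; lra. rewrite S_INR; lra. Qed.

Lemma sumN_zero n f : (forall i, (i < n)%nat -> f i = 0) -> sumN n f = 0.
Proof. intros H. rewrite (sumN_ext n f (fun _ => 0)) by auto. rewrite sumN_const; lra. Qed.

Lemma sumN_abs n f : Rabs (sumN n f) <= sumN n (fun i => Rabs (f i)).
Proof. induction n; simpl. rewrite Rabs_R0; lra.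
  eapply Rle_trans. apply Rabs_triang. lra. Qed.

Lemma sumN_nonneg n f : (forall i, (i < n)%nat -> 0 <= f i) -> 0 <= sumN n f.
Proof. intros H. replace 0 with (sumN n (fun _ => 0)) at 1.
  apply sumN_le; auto. rewrite sumN_const; lra. Qed.

Lemma sumN_term n f k : (forall i, (i < n)%nat -> 0 <= f i) -> (k < n)%nat -> f k <= sumN n f.
Proof. induction n; intros H Hk. lia. simpl.
  assert (0 <= sumN n f) by (apply sumN_nonneg; intros; apply H; lia).
  destruct (Nat.eq_dec k n). subst; lra.
  assert (f k <= sumN n f) by (apply IHn; [intros; apply H; lia | lia]).
  assert (0 <= f n) by (apply H; lia). lra. Qed.

Lemma sumN_swap n m f : sumN n (fun i => sumN m (fun j => f i j)) = sumN m (fun j => sumN n (fun i => f i j)).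
Proof. induction n; simpl. rewrite sumN_zero; auto.
  rewrite IHn. rewrite <- sumN_plus. reflexivity. Qed.

Lemma minN_le n f k : (k < n)%nat -> minN n f <= f k.
Proof. induction n; intros Hk. lia. destruct n. simpl. assert (k = 0)%nat by lia. subst; lra.
  change (minN (S (S n)) f) with (Rmin (minN (S n) f) (f (S n))).
  destruct (Nat.eq_dec k (S n)). subst. apply Rmin_r.
  eapply Rle_trans. apply Rmin_l. apply IHn; lia. Qed.

Lemma minN_attained n f : (0 < n)%nat -> exists k, (k < n)%nat /\ minN n f = f k.
Proof. induction n; intros Hn. lia. destruct n. exists 0%nat; split; [lia|reflexivity].
  change (minN (S (S n)) f) with (Rmin (minN (S n) f) (f (S n))).
  destruct (IHn ltac:(lia)) as [k [Hk E]]. unfold Rmin. destruct (Rle_dec _ _).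
  exists k; split; [lia|auto]. exists (S n); split; [lia|auto]. Qed.

Lemma sat_eq s x : 0 < s -> sat s x = (if Rle_dec s x then s else if Rle_dec x (-s) then -s else x).
Proof. intros Hs. unfold sat, sign, Rmin.
  destruct (Rlt_dec 0 x); destruct (Rle_dec s x); try destruct (Rle_dec x (-s)); try destruct (Rlt_dec x 0);
  destruct (Rle_dec (Rabs x) s); unfold Rabs in *; destruct (Rcase_abs x); try lra. Qed.

Ltac satcase s x Hs := rewrite (sat_eq s x Hs); destruct (Rle_dec s x); try destruct (Rle_dec x (-s)).

Lemma sat_bound s x : 0 < s -> Rabs (sat s x) <= s.
Proof. intros Hs. satcase s x Hs; unfold Rabs; destruct Rcase_abs; lra. Qed.

Lemma sat_lip s a b : 0 < s -> Rabs (sat s a - sat s b) <= Rabs (a - b).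
Proof. intros Hs. satcase s a Hs; satcase s b Hs; unfold Rabs; repeat destruct Rcase_abs; lra. Qed.

Lemma sat_opp s a : 0 < s -> sat s (-a) = - sat s a.
Proof. intros Hs. satcase s a Hs; satcase s (-a) Hs; lra. Qed.

Lemma sat_id s a : 0 < s -> Rabs a <= s -> sat s a = a.
Proof. intros Hs H. unfold Rabs in H; destruct Rcase_abs; satcase s a Hs; lra. Qed.

Lemma sat_gt s x a : 0 < s -> -s <= a -> a < sat s x -> a < x.
Proof. intros Hs. satcase s x Hs; lra. Qed.

Lemma sat_lt s x b : 0 < s -> b <= s -> sat s x < b -> x < b.
Proof. intros Hs. satcase s x Hs; lra. Qed.

Lemma sat_ge_self s x c : 0 < s -> -s <= c -> c < sat s x -> sat s x <= x.
Proof. intros Hs. satcase s x Hs; lra. Qed.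

Lemma sat_le_self s x c : 0 < s -> c <= s -> sat s x < c -> x <= sat s x.
Proof. intros Hs. satcase s x Hs; lra. Qed.

Definition Phi (s x : R) : R :=
  if Rle_dec s x then s * x - s * s / 2 else if Rle_dec x (-s) then - s * x - s * s / 2 else x * x / 2.

Lemma Phi_nonneg s x : 0 < s -> 0 <= Phi s x.
Proof. intros Hs. unfold Phi. destruct (Rle_dec s x); try destruct (Rle_dec x (-s)); nra. Qed.

Lemma Phi_conv s a b : 0 < s -> sat s a * (b - a) <= Phi s b - Phi s a <= sat s b * (b - a).
Proof. intros Hs. unfold Phi. 
  pose proof (pow2_ge_0 (b-a)); pose proof (pow2_ge_0 (b-s)); pose proof (pow2_ge_0 (a-s));
  pose proof (pow2_ge_0 (b+s)); pose proof (pow2_ge_0 (a+s));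
  satcase s a Hs; satcase s b Hs; split; nra. Qed.

Lemma Phi_deriv s a : 0 < s -> derivable_pt_lim (Phi s) a (sat s a).
Proof. intros Hs eps Heps. exists (mkposreal eps Heps). intros h Hh Hhd. simpl in Hhd.
  destruct (Phi_conv s a (a + h) Hs) as [H1 H2].
  pose proof (sat_lip s (a+h) a Hs). replace (a + h - a) with h in * by ring.
  apply Rle_lt_trans with (Rabs h); auto.
  destruct (Rlt_dec 0 h).
  - rewrite (Rabs_right h) by lra. rewrite (Rabs_right h) in H by lra.
    assert (sat s a <= (Phi s (a + h) - Phi s a) / h <= sat s (a+h)).
    { assert (E : (Phi s (a + h) - Phi s a) / h * h = Phi s (a + h) - Phi s a) by (field; lra).
      split; apply Rmult_le_reg_r with h; auto; rewrite E; lra. }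
    unfold Rabs; destruct Rcase_abs; unfold Rabs in H; destruct Rcase_abs in H; lra.
  - assert (h < 0) by lra. rewrite (Rabs_left h) by lra. rewrite (Rabs_left h) in H by lra.
    assert (sat s (a+h) <= (Phi s (a + h) - Phi s a) / h <= sat s a).
    { assert (E : (Phi s (a + h) - Phi s a) / h * (-h) = - (Phi s (a + h) - Phi s a)) by (field; lra).
      split; apply Rmult_le_reg_r with (-h); try lra; rewrite E; lra. }
    unfold Rabs; destruct Rcase_abs; unfold Rabs in H; destruct Rcase_abs in H; lra.
Qed.

Lemma deriv_sum n (g : R -> nat -> R) (g' : nat -> R) t :
  (forall i, (i < n)%nat -> derivable_pt_lim (fun tau => g tau i) t (g' i)) ->
  derivable_pt_lim (fun tau => sumN n (fun i => g tau i)) t (sumN n g').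
Proof. induction n; intros H; simpl.
  - apply derivable_pt_lim_const.
  - apply (derivable_pt_lim_plus (fun tau => sumN n (fun i => g tau i)) (fun tau => g tau n)).
    apply IHn; intros; apply H; lia. apply H; lia. Qed.

Lemma lap_sum N (alpha : nat -> nat -> R) (y : nat -> R) :
  (forall i j, (i < N)%nat -> (j < N)%nat -> alpha i j = alpha j i) ->
  sumN N (fun i => sumN N (fun j => alpha i j * (y j - y i))) = 0.
Proof. intros Hsym.
  assert (E : sumN N (fun i => sumN N (fun j => alpha i j * (y j - y i))) =
     - sumN N (fun i => sumN N (fun j => alpha i j * (y j - y i)))).
  { rewrite sumN_swap at 1. rewrite <- sumN_opp. apply sumN_ext; intros j Hj.
    rewrite <- sumN_opp. apply sumN_ext; intros i Hi. rewrite Hsym by auto. ring. }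
  lra. Qed.

Lemma lap_quad N (alpha : nat -> nat -> R) (y : nat -> R) :
  (forall i j, (i < N)%nat -> (j < N)%nat -> alpha i j = alpha j i) ->
  sumN N (fun i => y i * sumN N (fun j => alpha i j * (y j - y i))) =
  - / 2 * sumN N (fun i => sumN N (fun j => alpha i j * (y i - y j) ^ 2)).
Proof. intros Hsym.
  set (A := sumN N (fun i => y i * sumN N (fun j => alpha i j * (y j - y i)))).
  assert (E1 : A = sumN N (fun i => sumN N (fun j => alpha i j * y i * (y j - y i)))).
  { unfold A. apply sumN_ext; intros. rewrite <- sumN_scal. apply sumN_ext; intros; ring. }
  assert (E2 : A = sumN N (fun i => sumN N (fun j => alpha i j * y j * (y i - y j)))).
  { rewrite E1, sumN_swap. apply sumN_ext; intros j Hj. apply sumN_ext; intros i Hi.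
    rewrite Hsym by auto. ring. }
  assert (E3 : A + A = - sumN N (fun i => sumN N (fun j => alpha i j * (y i - y j) ^ 2))).
  { rewrite E1 at 1. rewrite E2. rewrite <- sumN_plus, <- sumN_opp. apply sumN_ext; intros.
    rewrite <- sumN_plus, <- sumN_opp. apply sumN_ext; intros. ring. }
  lra. Qed.

Record Hyp (N : nat) (alpha : nat -> nat -> R) (s : nat -> R) (t0 : R) (x : R -> nat -> R) : Prop := {
  Hsym : forall i j, (i < N)%nat -> (j < N)%nat -> alpha i j = alpha j i;
  Hnn : forall i j, (i < N)%nat -> (j < N)%nat -> 0 <= alpha i j;
  Hs : forall i, (i < N)%nat -> 0 < s i;
  Hsol : is_solution N alpha s t0 x }.

Definition F N alpha s (x : R -> nat -> R) t i :=
  sumN N (fun j => alpha i j * (sat (s j) (x t j) - sat (s i) (x t i))).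

Definition Bd N alpha (s : nat -> R) i := sumN N (fun j => alpha i j * (s j + s i)).


Lemma F_deriv N alpha s t0 x (H : Hyp N alpha s t0 x) i t :
  (i < N)%nat -> t0 < t -> derivable_pt_lim (fun tau => x tau i) t (F N alpha s x t i).
Proof. intros. apply (proj1 (Hsol _ _ _ _ _ H)); auto. Qed.

Lemma F_bound N alpha s t0 x (H : Hyp N alpha s t0 x) i t :
  (i < N)%nat -> Rabs (F N alpha s x t i) <= Bd N alpha s i.
Proof. intros Hi. unfold F, Bd. eapply Rle_trans. apply sumN_abs. apply sumN_le; intros j Hj.
  rewrite Rabs_mult. rewrite (Rabs_right (alpha i j)) by (apply Rle_ge, (Hnn _ _ _ _ _ H); auto).
  apply Rmult_le_compat_l. apply (Hnn _ _ _ _ _ H); auto.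
  pose proof (sat_bound (s j) (x t j) (Hs _ _ _ _ _ H j Hj)).
  pose proof (sat_bound (s i) (x t i) (Hs _ _ _ _ _ H i Hi)).
  eapply Rle_trans. apply Rabs_triang. rewrite Rabs_Ropp. lra. Qed.

Lemma x_lip N alpha s t0 x (H : Hyp N alpha s t0 x) i t u :
  (i < N)%nat -> t0 < t -> t <= u -> Rabs (x u i - x t i) <= Bd N alpha s i * (u - t).
Proof. intros Hi Ht Htu. destruct (Req_dec t u). subst. replace (x u i - x u i) with 0 by ring.
  rewrite Rabs_R0; lra.
  destruct (MVT_cor2 (fun tau => x tau i) (fun tau => F N alpha s x tau i) t u) as [c [E Hc]]. lra.
  intros. apply (F_deriv _ _ _ _ _ H); auto; lra.
  rewrite E, Rabs_mult, (Rabs_right (u - t)) by lra. apply Rmult_le_compat_r. lra.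
  apply (F_bound _ _ _ _ _ H); auto. Qed.

Definition V N (s : nat -> R) (x : R -> nat -> R) t := sumN N (fun i => Phi (s i) (x t i)).

Lemma V_deriv N alpha s t0 x (H : Hyp N alpha s t0 x) t : t0 < t ->
  derivable_pt_lim (V N s x) t
   (- / 2 * sumN N (fun i => sumN N (fun j => alpha i j * (sat (s i) (x t i) - sat (s j) (x t j)) ^ 2))).
Proof. intros Ht.
  rewrite <- (lap_quad N alpha (fun i => sat (s i) (x t i))) by (apply (Hsym _ _ _ _ _ H)).
  unfold V. apply (deriv_sum N (fun tau i => Phi (s i) (x tau i))). intros i Hi.
  apply (derivable_pt_lim_comp (fun tau => x tau i) (Phi (s i))).
  apply (F_deriv _ _ _ _ _ H); auto. apply Phi_deriv. apply (Hs _ _ _ _ _ H); auto. Qed.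

Lemma DD_nonneg N alpha s t0 x (H : Hyp N alpha s t0 x) t :
  0 <= sumN N (fun i => sumN N (fun j => alpha i j * (sat (s i) (x t i) - sat (s j) (x t j)) ^ 2)).
Proof. apply sumN_nonneg; intros i Hi; apply sumN_nonneg; intros j Hj.
  apply Rmult_le_pos. apply (Hnn _ _ _ _ _ H); auto. apply pow2_ge_0. Qed.

Lemma DD_term N alpha s t0 x (H : Hyp N alpha s t0 x) t i j : (i < N)%nat -> (j < N)%nat ->
  alpha i j * (sat (s i) (x t i) - sat (s j) (x t j)) ^ 2 <=
  sumN N (fun i => sumN N (fun j => alpha i j * (sat (s i) (x t i) - sat (s j) (x t j)) ^ 2)).
Proof. intros Hi Hj. eapply Rle_trans.
  2: apply (sumN_term N (fun i => sumN N (fun j => alpha i j * (sat (s i) (x t i) - sat (s j) (x t j)) ^ 2))).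
  simpl. apply (sumN_term N (fun j => alpha i j * (sat (s i) (x t i) - sat (s j) (x t j)) ^ 2)).
  intros; apply Rmult_le_pos. apply (Hnn _ _ _ _ _ H); auto. apply pow2_ge_0. auto.
  intros k Hk; apply sumN_nonneg; intros l Hl. apply Rmult_le_pos. apply (Hnn _ _ _ _ _ H); auto. apply pow2_ge_0.
  auto. Qed.

Lemma V_noninc N alpha s t0 x (H : Hyp N alpha s t0 x) t u : t0 < t -> t <= u -> V N s x u <= V N s x t.
Proof. intros Ht Htu. destruct (Req_dec t u). subst; lra.
  destruct (MVT_cor2 (V N s x) (fun c => - / 2 * sumN N (fun i => sumN N (fun j => alpha i j * (sat (s i) (x c i) - sat (s j) (x c j)) ^ 2))) t u) as [c [E Hc]]. lra.
  intros. apply (V_deriv _ _ _ _ _ H). lra.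
  pose proof (DD_nonneg _ _ _ _ _ H c). nra. Qed.

Lemma V_nonneg N alpha s t0 x (H : Hyp N alpha s t0 x) t : 0 <= V N s x t.
Proof. apply sumN_nonneg; intros. apply Phi_nonneg, (Hs _ _ _ _ _ H); auto. Qed.

Definition yd s (x : R -> nat -> R) i j t := sat (s i) (x t i) - sat (s j) (x t j).

Lemma Bd_nonneg N alpha s t0 x (H : Hyp N alpha s t0 x) i : (i < N)%nat -> 0 <= Bd N alpha s i.
Proof. intros. eapply Rle_trans. apply Rabs_pos. apply (F_bound _ _ _ _ _ H i t0); auto. Qed.

Lemma yd_lip N alpha s t0 x (H : Hyp N alpha s t0 x) i j t u : (i < N)%nat -> (j < N)%nat ->
  t0 < t -> t <= u -> Rabs (yd s x i j u - yd s x i j t) <= (Bd N alpha s i + Bd N alpha s j) * (u - t).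
Proof. intros Hi Hj Ht Htu. unfold yd.
  pose proof (x_lip _ _ _ _ _ H i t u Hi Ht Htu). pose proof (x_lip _ _ _ _ _ H j t u Hj Ht Htu).
  pose proof (sat_lip (s i) (x u i) (x t i) (Hs _ _ _ _ _ H i Hi)).
  pose proof (sat_lip (s j) (x u j) (x t j) (Hs _ _ _ _ _ H j Hj)).
  replace (sat (s i) (x u i) - sat (s j) (x u j) - (sat (s i) (x t i) - sat (s j) (x t j)))
   with ((sat (s i) (x u i) - sat (s i) (x t i)) - (sat (s j) (x u j) - sat (s j) (x t j))) by ring.
  eapply Rle_trans. apply Rabs_triang. rewrite Rabs_Ropp. lra. Qed.

Lemma edge_conv N alpha s t0 x (H : Hyp N alpha s t0 x) i j : (i < N)%nat -> (j < N)%nat ->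
  alpha i j > 0 -> forall eps, eps > 0 -> exists T, forall t, t >= T -> Rabs (yd s x i j t) < eps.
Proof. intros Hi Hj Ha eps Heps. apply NNPP; intros Hn.
  assert (Hbad : forall T, exists t, t >= T /\ Rabs (yd s x i j t) >= eps).
  { intros T. apply NNPP; intros H2. apply Hn. exists T. intros t Ht.
    apply Rnot_le_lt. intros H3. apply H2. exists t. split; auto; lra. }
  set (L := Bd N alpha s i + Bd N alpha s j).
  assert (HL : 0 <= L) by (unfold L; pose proof (Bd_nonneg _ _ _ _ _ H i Hi); pose proof (Bd_nonneg _ _ _ _ _ H j Hj); lra).
  set (d := eps / (2 * (L + 1))).
  assert (Hd : 0 < d) by (unfold d; apply Rdiv_lt_0_compat; lra).
  assert (HLd : L * d < eps / 2).
  { unfold d. apply Rmult_lt_reg_r with (2 * (L + 1)). lra.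
    replace (L * (eps / (2 * (L + 1))) * (2 * (L + 1))) with (L * eps) by (field; lra). nra. }
  set (k := / 2 * alpha i j * (eps / 2) ^ 2).
  assert (Hk : 0 < k) by (unfold k; apply Rmult_lt_0_compat; [lra| apply pow_lt; lra]).
  assert (Hdrop : forall t, t > t0 -> Rabs (yd s x i j t) >= eps -> V N s x (t + d) <= V N s x t - k * d).
  { intros t Ht Hy.
    destruct (MVT_cor2 (V N s x) (fun c => - / 2 * sumN N (fun i => sumN N (fun j => alpha i j * (sat (s i) (x c i) - sat (s j) (x c j)) ^ 2))) t (t + d)) as [c [E Hc]]. lra.
    intros. apply (V_deriv _ _ _ _ _ H). lra.
    pose proof (DD_term _ _ _ _ _ H c i j Hi Hj).
    pose proof (yd_lip _ _ _ _ _ H i j t c Hi Hj Ht ltac:(lra)). fold L in H1.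
    assert (L * (c - t) <= L * d) by (apply Rmult_le_compat_l; lra).
    assert (Hyc : Rabs (yd s x i j c) >= eps / 2).
    { unfold Rabs in *. repeat destruct Rcase_abs; lra. }
    assert (Hsq : (eps / 2) ^ 2 <= (yd s x i j c) ^ 2).
    { unfold Rabs in Hyc. destruct Rcase_abs in Hyc; nra. }
    unfold yd in Hsq.
    assert (alpha i j * (eps/2)^2 <= alpha i j * (sat (s i) (x c i) - sat (s j) (x c j)) ^ 2)
      by (apply Rmult_le_compat_l; lra).
    replace (t + d - t) with d in E by ring. unfold k. nra. }
  assert (Hit : forall n : nat, exists T, T >= t0 + 1 /\ V N s x T <= V N s x (t0 + 1) - INR n * (k * d)).
  { induction n. exists (t0 + 1). simpl. lra.
    destruct IHn as [T [HT HV]]. destruct (Hbad T) as [t [Ht Hy]].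
    exists (t + d). split. lra.
    pose proof (Hdrop t ltac:(lra) Hy). pose proof (V_noninc _ _ _ _ _ H T t ltac:(lra) ltac:(lra)).
    rewrite S_INR. lra. }
  destruct (INR_archimed (k * d) (V N s x (t0 + 1))) as [n Hn2]. apply Rmult_lt_0_compat; lra.
  destruct (Hit n) as [T [_ HT]]. pose proof (V_nonneg _ _ _ _ _ H T). lra.
Qed.

Lemma all_conv N alpha s t0 x (H : Hyp N alpha s t0 x) (Hconn : connected N alpha) i j :
  (i < N)%nat -> (j < N)%nat -> forall eps, eps > 0 -> exists T, forall t, t >= T -> Rabs (yd s x i j t) < eps.
Proof. intros Hi Hj. pose proof (Hconn i j Hi Hj) as Hc. induction Hc.
  - destruct H0 as [? [? ?]]. apply (edge_conv _ _ _ _ _ H); auto.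
  - intros eps Heps. exists 0. intros. unfold yd. replace (sat (s x0) (x t x0) - sat (s x0) (x t x0)) with 0 by ring.
    rewrite Rabs_R0; lra.
  - intros eps Heps.
    assert (Hy : (y < N)%nat).
    { clear - Hc1 Hi. induction Hc1; auto. destruct H as [? [? ?]]; auto. }
    destruct (IHHc1 Hi Hy (eps/2) ltac:(lra)) as [T1 H1]. destruct (IHHc2 Hy Hj (eps/2) ltac:(lra)) as [T2 H2].
    exists (Rmax T1 T2). intros t Ht. pose proof (H1 t ltac:(pose proof (Rmax_l T1 T2); lra)).
    pose proof (H2 t ltac:(pose proof (Rmax_r T1 T2); lra)). unfold yd in *.
    replace (sat (s x0) (x t x0) - sat (s z) (x t z)) with ((sat (s x0) (x t x0) - sat (s y) (x t y)) + (sat (s y) (x t y) - sat (s z) (x t z))) by ring.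
    eapply Rle_lt_trans. apply Rabs_triang. lra.
Qed.

Lemma ev_all n (P : nat -> R -> Prop) :
  (forall i, (i < n)%nat -> exists T, forall t, t >= T -> P i t) ->
  exists T, forall i, (i < n)%nat -> forall t, t >= T -> P i t.
Proof. induction n; intros H. exists 0; intros; lia.
  destruct IHn as [T1 H1]. intros; apply H; lia. destruct (H n ltac:(lia)) as [T2 H2].
  exists (Rmax T1 T2). intros i Hi t Ht. pose proof (Rmax_l T1 T2). pose proof (Rmax_r T1 T2).
  destruct (Nat.eq_dec i n). subst; apply H2; lra. apply H1; [lia|lra]. Qed.

Lemma del_all n (Q : nat -> R -> Prop) :
  (forall i d d', 0 < d' <= d -> Q i d -> Q i d') ->
  (forall i, (i < n)%nat -> exists d, d > 0 /\ Q i d) ->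
  exists d, d > 0 /\ forall i, (i < n)%nat -> Q i d.
Proof. intros Hm. induction n; intros H. exists 1; split; [lra|intros; lia].
  destruct IHn as [d1 [Hd1 H1]]. intros; apply H; lia. destruct (H n ltac:(lia)) as [d2 [Hd2 H2]].
  exists (Rmin d1 d2). assert (0 < Rmin d1 d2) by (apply Rmin_glb_lt; lra). split. lra.
  intros i Hi. destruct (Nat.eq_dec i n). subst. apply (Hm n d2); auto. split; auto. apply Rmin_r.
  apply (Hm i d1). split; auto. apply Rmin_l. apply H1; lia. Qed.

Lemma cont_of_deriv f t l : derivable_pt_lim f t l ->
  forall eps, eps > 0 -> exists d, d > 0 /\ forall u, Rabs (u - t) < d -> Rabs (f u - f t) < eps.
Proof. intros Hd eps Heps.
  assert (Hc : continuity_pt f t) by (apply derivable_continuous_pt; exists l; auto).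
  destruct (Hc eps Heps) as [d [Hd0 Hd1]]. exists d; split; auto. intros u Hu.
  destruct (Req_dec u t). subst. replace (f t - f t) with 0 by ring. rewrite Rabs_R0; lra.
  apply (Hd1 u). split. split. exact I. auto. simpl. unfold R_dist. auto. Qed.

Lemma eq_of_close a b : (forall eps, eps > 0 -> Rabs (a - b) < eps) -> a = b.
Proof. intros H. destruct (Req_dec a b); auto. exfalso.
  pose proof (H (Rabs (a - b)) ltac:(apply Rabs_pos_lt; lra)). lra. Qed.

Lemma conservation N alpha s t0 x (H : Hyp N alpha s t0 x) t : t0 < t ->
  sumN N (fun i => x t i) = sumN N (fun i => x t0 i).
Proof. intros Ht.
  assert (Hconst : forall a b, t0 < a -> a < b -> sumN N (fun i => x b i) = sumN N (fun i => x a i)).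
  { intros a b Ha Hab. destruct (MVT_cor2 (fun tau => sumN N (fun i => x tau i)) (fun c => sumN N (fun i => F N alpha s x c i)) a b) as [c [E Hc]]; auto.
    intros c Hc. apply (deriv_sum N x). intros i Hi. apply (F_deriv _ _ _ _ _ H); auto; lra.
    unfold F in E. rewrite (lap_sum N alpha (fun k => sat (s k) (x c k))) in E by apply (Hsym _ _ _ _ _ H). lra. }
  apply eq_of_close. intros eps Heps.
  destruct (del_all N (fun i d => forall u, t0 <= u < t0 + d -> Rabs (x u i - x t0 i) < eps / (INR N + 1))) as [d [Hd Hd2]].
  { intros i d d' Hdd Hq u Hu. apply Hq. lra. }
  { intros i Hi. apply (proj2 (Hsol _ _ _ _ _ H)); auto. apply Rdiv_lt_0_compat; auto. pose proof (pos_INR N); lra. }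
  set (u := t0 + Rmin d (t - t0) / 2).
  assert (0 < Rmin d (t - t0)) by (apply Rmin_glb_lt; lra).
  assert (Rmin d (t - t0) <= d) by apply Rmin_l. assert (Rmin d (t - t0) <= t - t0) by apply Rmin_r.
  assert (Eu : sumN N (fun i => x t i) = sumN N (fun i => x u i)).
  { destruct (Req_dec u t). rewrite H3; auto. apply Hconst; unfold u in *; lra. }
  rewrite Eu. replace (sumN N (fun i => x u i) - sumN N (fun i => x t0 i)) with (sumN N (fun i => x u i - x t0 i))
    by (unfold Rminus; rewrite sumN_plus, <- sumN_opp; auto).
  eapply Rle_lt_trans. apply sumN_abs.
  eapply Rle_lt_trans. apply (sumN_le N _ (fun _ => eps / (INR N + 1))). intros i Hi. left. apply Hd2; auto. unfold u; lra.
  rewrite sumN_const. pose proof (pos_INR N).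
  replace (INR N * (eps / (INR N + 1))) with (eps * (INR N / (INR N + 1))) by (field; lra).
  assert (INR N / (INR N + 1) < 1). { apply Rmult_lt_reg_r with (INR N + 1). lra.
    replace (INR N / (INR N + 1) * (INR N + 1)) with (INR N) by (field; lra). lra. }
  nra.
Qed.

Lemma dir_if N alpha s t0 x (H : Hyp N alpha s t0 x) (Hconn : connected N alpha) (HN : (0 < N)%nat)
  (Hc : / INR N * Rabs (sumN N (fun i => x t0 i)) <= minN N s) : consensus N x.
Proof.
  set (S0 := sumN N (fun i => x t0 i)) in *.
  assert (HNr : 0 < INR N) by (apply lt_0_INR; auto).
  set (c := S0 / INR N).
  assert (HS0 : INR N * c = S0) by (unfold c; field; lra).
  set (m := minN N s) in *.
  assert (Hcm : Rabs c <= m).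
  { unfold c, Rdiv. rewrite Rabs_mult, Rabs_inv, (Rabs_right (INR N)) by lra. lra. }
  assert (Hms : forall i, (i < N)%nat -> m <= s i) by (intros; apply minN_le; auto).
  assert (Hm0 : 0 < m).
  { destruct (minN_attained N s HN) as [k [Hk E]]. unfold m. rewrite E. apply (Hs _ _ _ _ _ H); auto. }
  assert (Hcs : forall i, (i < N)%nat -> -s i <= c <= s i).
  { intros i Hi. pose proof (Hms i Hi). unfold Rabs in Hcm; destruct Rcase_abs in Hcm; lra. }
  exists c. intros i Hi eps Heps.
  set (eta := Rmin (eps / (2 * INR N)) (m / 2)).
  assert (Heta : 0 < eta) by (apply Rmin_glb_lt; [apply Rdiv_lt_0_compat|]; lra).
  assert (Heta1 : eta <= eps / (2 * INR N)) by apply Rmin_l.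
  assert (Heta2 : eta <= m / 2) by apply Rmin_r.
  assert (HNe : 2 * INR N * eta <= eps).
  { replace eps with (2 * INR N * (eps / (2 * INR N))) by (field; lra).
    apply Rmult_le_compat_l; lra. }
  assert (HN1 : 1 <= INR N) by (apply (le_INR 1); lia).
  destruct (ev_all N (fun k t => Rabs (yd s x k 0 t) < eta)) as [T HT].
  { intros k Hk. apply (all_conv _ _ _ _ _ H Hconn); auto. }
  exists (Rmax T (t0 + 1)). intros t Ht.
  pose proof (Rmax_l T (t0+1)). pose proof (Rmax_r T (t0+1)).
  assert (Hcons : sumN N (fun k => x t k) = S0) by (apply (conservation _ _ _ _ _ H); lra).
  assert (Hcons2 : sumN N (x t) = S0) by exact Hcons.
  assert (HT' : forall k, (k < N)%nat -> Rabs (yd s x k 0 t) < eta) by (intros; apply HT; auto; lra).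
  unfold yd in HT'.
  assert (Hsk : forall k, (k < N)%nat -> 0 < s k) by apply (Hs _ _ _ _ _ H).
  assert (Hy0 : Rabs (sat (s 0%nat) (x t 0%nat) - c) < eta).
  { destruct (Rlt_dec (sat (s 0%nat) (x t 0%nat) - c) eta); destruct (Rlt_dec (- eta) (sat (s 0%nat) (x t 0%nat) - c));
    try (unfold Rabs; destruct Rcase_abs; lra); exfalso.
    - assert (sumN N (fun k => x t k) < sumN N (fun _ => c)).
      { apply sumN_lt; auto. intros k Hk. pose proof (Rabs_def2 _ _ (HT' k Hk)).
        assert (sat (s k) (x t k) < c) by lra.
        pose proof (sat_le_self (s k) (x t k) c (Hsk k Hk) ltac:(pose proof (Hcs k Hk); lra) H3). lra. }
      rewrite sumN_const in H2. lra.
    - assert (sumN N (fun _ => c) < sumN N (fun k => x t k)).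
      { apply sumN_lt; auto. intros k Hk. pose proof (Rabs_def2 _ _ (HT' k Hk)).
        assert (c < sat (s k) (x t k)) by lra.
        pose proof (sat_ge_self (s k) (x t k) c (Hsk k Hk) ltac:(pose proof (Hcs k Hk); lra) H3). lra. }
      rewrite sumN_const in H2. lra. }
  assert (Hyk : forall k, (k < N)%nat -> c - 2 * eta < sat (s k) (x t k) < c + 2 * eta).
  { intros k Hk. pose proof (Rabs_def2 _ _ (HT' k Hk)). pose proof (Rabs_def2 _ _ Hy0). lra. }
  destruct (Rle_dec 0 c).
  - assert (Hlow : forall k, (k < N)%nat -> c - 2 * eta < x t k).
    { intros k Hk. apply (sat_gt (s k)). auto. pose proof (Hms k Hk); lra. apply Hyk; auto. }
    assert (Hsum : sumN N (fun k => x t k - (c - 2 * eta)) = 2 * INR N * eta).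
    { unfold Rminus. rewrite sumN_plus, sumN_const; try rewrite Hcons2; try rewrite Hcons. rewrite <- HS0. ring. }
    assert (x t i - (c - 2 * eta) <= sumN N (fun k => x t k - (c - 2 * eta))).
    { apply (sumN_term N (fun k => x t k - (c - 2 * eta))); auto. intros k Hk. pose proof (Hlow k Hk); lra. }
    pose proof (Hlow i Hi). unfold Rabs; destruct Rcase_abs; nra.
  - assert (Hup : forall k, (k < N)%nat -> x t k < c + 2 * eta).
    { intros k Hk. apply (sat_lt (s k)). auto. pose proof (Hms k Hk); lra. apply Hyk; auto. }
    assert (Hsum : sumN N (fun k => (c + 2 * eta) - x t k) = 2 * INR N * eta).
    { unfold Rminus. rewrite sumN_plus, sumN_const, sumN_opp; try rewrite Hcons2; try rewrite Hcons. rewrite <- HS0. ring. }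
    assert ((c + 2 * eta) - x t i <= sumN N (fun k => (c + 2 * eta) - x t k)).
    { apply (sumN_term N (fun k => (c + 2 * eta) - x t k)); auto. intros k Hk. pose proof (Hup k Hk); lra. }
    pose proof (Hup i Hi). unfold Rabs; destruct Rcase_abs; nra.
Qed.

Lemma main_only N alpha s t0 x (H : Hyp N alpha s t0 x) (Hconn : connected N alpha)
  (Hnc : exists i j, (i < N)%nat /\ (j < N)%nat /\ x t0 i <> x t0 j) k C :
  (k < N)%nat -> C > s k ->
  (forall i, (i < N)%nat -> forall eps, eps > 0 -> exists T, forall t, t >= T -> Rabs (x t i - C) < eps) -> False.
Proof. intros Hk HC Hconv.
  assert (Hsk : forall i, (i < N)%nat -> 0 < s i) by apply (Hs _ _ _ _ _ H).
  pose proof (Hsk k Hk) as Hsk0.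
  assert (Hsat : forall i, (i < N)%nat -> sat (s i) C = sat (s k) C).
  { intros i Hi. apply eq_of_close. intros eps Heps.
    destruct (Hconv i Hi (eps/3) ltac:(lra)) as [T1 H1]. destruct (Hconv k Hk (eps/3) ltac:(lra)) as [T2 H2].
    destruct (all_conv _ _ _ _ _ H Hconn i k Hi Hk (eps/3) ltac:(lra)) as [T3 H3].
    set (t := Rmax T1 (Rmax T2 T3)).
    pose proof (Rmax_l T1 (Rmax T2 T3)). pose proof (Rmax_r T1 (Rmax T2 T3)).
    pose proof (Rmax_l T2 T3). pose proof (Rmax_r T2 T3).
    specialize (H1 t ltac:(unfold t; lra)). specialize (H2 t ltac:(unfold t; lra)). specialize (H3 t ltac:(unfold t; lra)).
    unfold yd in H3.
    pose proof (sat_lip (s i) C (x t i) (Hsk i Hi)). pose proof (sat_lip (s k) (x t k) C (Hsk k Hk)).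
    rewrite Rabs_minus_sym in H1.
    replace (sat (s i) C - sat (s k) C) with ((sat (s i) C - sat (s i) (x t i)) + (sat (s i) (x t i) - sat (s k) (x t k)) + (sat (s k) (x t k) - sat (s k) C)) by ring.
    eapply Rle_lt_trans. apply Rabs_triang. eapply Rle_lt_trans. apply Rplus_le_compat_r. apply Rabs_triang. lra. }
  set (sg := s k).
  assert (Hsi : forall i, (i < N)%nat -> s i = sg).
  { intros i Hi. pose proof (Hsat i Hi). pose proof (Hsk i Hi). revert H0.
    rewrite (sat_eq (s i) C (Hsk i Hi)), (sat_eq (s k) C Hsk0). unfold sg.
    destruct (Rle_dec (s k) C); [|lra]. destruct (Rle_dec (s i) C). intros; lra.
    destruct (Rle_dec C (- s i)); intros; lra. }
  assert (Hzero : forall t, t > t0 -> (forall j, (j < N)%nat -> x t j > sg) -> forall i, (i < N)%nat -> F N alpha s x t i = 0).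
  { intros t Ht Hj i Hi. unfold F. apply sumN_zero. intros j Hj2.
    rewrite (Hsi i Hi), (Hsi j Hj2). rewrite !sat_eq by (unfold sg; lra).
    destruct (Rle_dec sg (x t j)); [|specialize (Hj j Hj2); lra].
    destruct (Rle_dec sg (x t i)); [|specialize (Hj i Hi); lra]. ring. }
  set (P := fun u => u >= t0 /\ forall t, t > u -> forall j, (j < N)%nat -> x t j > sg).
  assert (Hconst : forall u, P u -> forall t, t > u -> forall i, (i < N)%nat -> x t i = C).
  { intros u [Hu HP] t Ht i Hi.
    assert (Hc : forall a b, u < a -> a < b -> x b i = x a i).
    { intros a b Ha Hab. destruct (MVT_cor2 (fun tau => x tau i) (fun c => F N alpha s x c i) a b) as [c [E Hc]]; auto.
      intros c Hc. apply (F_deriv _ _ _ _ _ H); auto; lra.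
      rewrite (Hzero c ltac:(lra)) in E; auto. lra. intros j Hj; apply HP; auto; lra. }
    apply eq_of_close. intros eps Heps. destruct (Hconv i Hi eps Heps) as [T HT].
    set (t' := Rmax T (t + 1)). pose proof (Rmax_l T (t+1)). pose proof (Rmax_r T (t+1)).
    rewrite <- (Hc t t'); auto. apply HT; unfold t'; lra. unfold t'; lra. }
  destruct (ev_all N (fun j t => Rabs (x t j - C) < C - sg)) as [T1 HT1].
  { intros j Hj. apply Hconv; auto. unfold sg; lra. }
  assert (HP1 : P (Rmax T1 t0)).
  { split. pose proof (Rmax_r T1 t0); lra. intros t Ht j Hj.
    pose proof (Rmax_l T1 t0). pose proof (Rabs_def2 _ _ (HT1 j Hj t ltac:(lra))). lra. }
  destruct (completeness (fun v => P (- v))) as [L [HL1 HL2]].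
  { exists (- t0). intros v [Hv _]. lra. }
  { exists (- Rmax T1 t0). rewrite Ropp_involutive. auto. }
  set (tau := - L).
  assert (Htau0 : tau >= t0).
  { assert (L <= - t0). apply HL2. intros v [Hv _]. lra. unfold tau; lra. }
  assert (Hlow : forall u, P u -> tau <= u).
  { intros u Hu. assert (- u <= L) by (apply HL1; rewrite Ropp_involutive; auto). unfold tau; lra. }
  assert (HA : forall t, t > tau -> forall j, (j < N)%nat -> x t j > sg).
  { intros t Ht. apply NNPP; intros Hn.
    assert (L <= - t). { apply HL2. intros v Hv. apply Rnot_lt_le. intros Hlt. apply Hn.
      destruct Hv as [_ Hv]. intros; apply Hv; auto. lra. }
    unfold tau in Ht; lra. }
  assert (HPtau : P tau) by (split; auto).
  assert (Htau : tau = t0).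
  { destruct (Rle_dec tau t0). lra. exfalso.
    assert (Hxt : forall i, (i < N)%nat -> x tau i = C).
    { intros i Hi. apply eq_of_close. intros eps Heps.
      destruct (cont_of_deriv _ _ _ (F_deriv _ _ _ _ _ H i tau Hi ltac:(lra)) eps Heps) as [d [Hd Hd2]].
      specialize (Hd2 (tau + d / 2)). rewrite (Hconst tau HPtau (tau + d/2)) in Hd2; auto; try lra.
      rewrite Rabs_minus_sym. apply Hd2. replace (tau + d / 2 - tau) with (d/2) by ring.
      rewrite Rabs_right; lra. }
    destruct (del_all N (fun i d => forall u, Rabs (u - tau) < d -> x u i > sg)) as [d [Hd Hd2]].
    { intros i d d' Hdd Hq u Hu. apply Hq; lra. }
    { intros i Hi. destruct (cont_of_deriv _ _ _ (F_deriv _ _ _ _ _ H i tau Hi ltac:(lra)) (C - sg) ltac:(unfold sg; lra)) as [d [Hd Hd2]].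
      exists d; split; auto. intros u Hu. pose proof (Rabs_def2 _ _ (Hd2 u Hu)). rewrite Hxt in H0; auto. lra. }
    set (u := Rmax t0 (tau - d / 2)).
    assert (P u).
    { split. unfold u; pose proof (Rmax_l t0 (tau - d/2)); lra.
      intros t Ht j Hj. destruct (Rlt_dec tau t). apply HA; auto; lra.
      apply Hd2; auto. pose proof (Rmax_r t0 (tau - d/2)). unfold u in Ht.
      rewrite Rabs_left1 by lra. lra. }
    pose proof (Hlow u H0). unfold u in H1. unfold Rmax in H1. destruct Rle_dec in H1; lra. }
  destruct Hnc as [i [j [Hi [Hj Hne]]]]. apply Hne.
  assert (Ht0 : forall i, (i < N)%nat -> x t0 i = C).
  { intros l Hl. apply eq_of_close. intros eps Heps.
    destruct (proj2 (Hsol _ _ _ _ _ H) l Hl eps Heps) as [d [Hd Hd2]].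
    specialize (Hd2 (t0 + d / 2) ltac:(lra)). rewrite (Hconst tau HPtau (t0 + d/2)) in Hd2; auto; try lra.
    rewrite Rabs_minus_sym; auto. }
  rewrite !Ht0; auto.
Qed.

Lemma hyp_opp N alpha s t0 x : Hyp N alpha s t0 x -> Hyp N alpha s t0 (fun t i => - x t i).
Proof. intros H. destruct H as [H1 H2 H3 [H4 H5]]. constructor; auto. split.
  - intros i Hi t Ht.
    replace (sumN N (fun j => alpha i j * (sat (s j) (- x t j) - sat (s i) (- x t i))))
      with (- sumN N (fun j => alpha i j * (sat (s j) (x t j) - sat (s i) (x t i)))).
    apply (derivable_pt_lim_opp (fun tau => x tau i)). auto.
    rewrite <- sumN_opp. apply sumN_ext. intros j Hj. rewrite !sat_opp by auto. ring.
  - intros i Hi eps Heps. destruct (H5 i Hi eps Heps) as [d [Hd Hd2]]. exists d; split; auto.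
    intros t Ht. replace (- x t i - - x t0 i) with (- (x t i - x t0 i)) by ring. rewrite Rabs_Ropp; auto.
Qed.

Theorem theorem1 (N : nat) (alpha : nat -> nat -> R) (s : nat -> R)
  (t0 : R) (x : R -> nat -> R)
  (Hsym : forall i j, (i < N)%nat -> (j < N)%nat -> alpha i j = alpha j i)
  (Hnn : forall i j, (i < N)%nat -> (j < N)%nat -> 0 <= alpha i j)
  (Hconn : connected N alpha)
  (Hs : forall i, (i < N)%nat -> 0 < s i)
  (Hsol : is_solution N alpha s t0 x)
  (Hnc : exists i j, (i < N)%nat /\ (j < N)%nat /\ x t0 i <> x t0 j) :
  consensus N x <->
  / INR N * Rabs (sumN N (fun i => x t0 i)) <= minN N s.
Proof.
  assert (H : Hyp N alpha s t0 x) by (constructor; auto).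
  assert (HN : (0 < N)%nat) by (destruct Hnc as [i [j [Hi _]]]; lia).
  assert (HNr : 0 < INR N) by (apply lt_0_INR; auto).
  split; [|apply dir_if with alpha; auto].
  intros [C HC].
  assert (HS : sumN N (fun i => x t0 i) = INR N * C).
  { apply eq_of_close. intros eps Heps.
    destruct (ev_all N (fun i t => Rabs (x t i - C) < eps / INR N)) as [T HT].
    { intros i Hi. apply HC; auto. apply Rdiv_lt_0_compat; lra. }
    set (t := Rmax T (t0 + 1)). pose proof (Rmax_l T (t0+1)). pose proof (Rmax_r T (t0+1)).
    rewrite <- (conservation _ _ _ _ _ H t) by (unfold t; lra).
    rewrite <- sumN_const. replace (sumN N (fun i => x t i) - sumN N (fun _ => C)) with (sumN N (fun i => x t i - C))
      by (unfold Rminus; rewrite sumN_plus, <- sumN_opp; auto).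
    eapply Rle_lt_trans. apply sumN_abs.
    apply Rlt_le_trans with (sumN N (fun _ => eps / INR N)).
    apply sumN_lt; auto. intros i Hi. apply HT; auto. unfold t; lra.
    rewrite sumN_const. right. field. lra. }
  rewrite HS. rewrite Rabs_mult, (Rabs_right (INR N)) by lra.
  replace (/ INR N * (INR N * Rabs C)) with (Rabs C) by (field; lra).
  destruct (minN_attained N s HN) as [k [Hk E]]. rewrite E.
  apply Rnot_lt_le. intros Hlt. unfold Rabs in Hlt. destruct Rcase_abs in Hlt.
  - apply (main_only N alpha s t0 (fun t i => - x t i) (hyp_opp _ _ _ _ _ H) Hconn) with k (- C); auto.
    destruct Hnc as [i [j [Hi [Hj Hne]]]]. exists i, j. repeat split; auto. intros Heq; apply Hne; lra.
    intros i Hi eps Heps. destruct (HC i Hi eps Heps) as [T HT]. exists T. intros t Ht.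
    replace (- x t i - - C) with (- (x t i - C)) by ring. rewrite Rabs_Ropp; auto.
  - apply (main_only N alpha s t0 x H Hconn Hnc k C); auto; lra.
Qed.
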